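(* Let $\mathcal{H} = \mathcal{H}_{1}\otimes\cdots\otimes\mathcal{H}_{n}$ be a tensor product of finite-dimensional complex Hilbert spaces, let $\ket{\psi}\in\mathcal{H}$ be a unit vector and $\rho=\ket{\psi}\bra{\psi}$. Then for each $k = 1,\dots,n-1$, $$\dim\big(\Omega^k(\rho)\big) = \dim\big(\Omega^{n-k}(\rho)\big).$$
   Context: For $I\subseteq\{1,\dots,n\}$, let $\mathcal{H}_I=\bigotimes_{i\in I}\mathcal{H}_i$ (factors in increasing order), $\rho_I = \mathrm{tr}_{I^C}(\rho)$ the reduced density matrix (partial trace over the complementary factors), and $s_I$ the orthogonal projection of $\mathcal{H}_I$ onto $\mathrm{im}(\rho_I)$ (the support projection). For a linear operator $\mathcal{O}$ on $\mathcal{H}_I$ its restriction is $\mathcal{O}|_{\rho_I} = s_I\mathcal{O}s_I$. For $1\le k\le n$, the space of entanglement $k$-forms is the complex vector space $$\Omega^k(\rho) = \prod_{I\subseteq\{1,\dots,n\},\ |I|=k}\{\, s_I\mathcal{O}s_I \;:\; \mathcal{O}\text{ a linear operator on }\mathcal{H}_I\},$$ i.e. tuples (indexed by the $k$-element subsets, lexicographically ordered) of restricted operators. *)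

(* Defs.v *)
From HB Require Import structures.
From mathcomp Require Import all_boot all_order all_algebra.
Set Implicit Arguments. Unset Strict Implicit. Unset Printing Implicit Defensive.
Import Order.TTheory GRing.Theory Num.Theory.
Local Open Scope ring_scope.

Section Entanglement.
Variables (C : numClosedFieldType) (n : nat) (d : 'I_n -> nat).

(* Basis index of H = H_1 (x) ... (x) H_n : multi-indices (x_1,...,x_n),
   x_i < d i.  A vector of H is a function on these. *)
Definition basis_full := {dffun forall i : 'I_n, 'I_(d i)}.

(* Basis index of H_I : multi-indices over the factors in I. *)
Definition basis_sub (I : {set 'I_n}) :=
  {dffun forall j : {i : 'I_n | i \in I}, 'I_(d (val j))}.

Definition restr (I : {set 'I_n}) (x : basis_full) : basis_sub I :=
  [ffun j : {i : 'I_n | i \in I} => x (val j)].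

Definition pure_state (psi : basis_full -> C) (x y : basis_full) : C :=
  psi x * (psi y)^*.

(* partial trace over the complement of I:
   (tr_{I^C} A)(a,b) = sum_c A(a (+) c, b (+) c), where a (+) c is the unique
   full index restricting to a on I and to c on I^C *)
Definition ptrace (I : {set 'I_n}) (A : basis_full -> basis_full -> C)
    (a b : basis_sub I) : C :=
  \sum_(c : basis_sub (~: I))
    \sum_(x : basis_full | (restr I x == a) && (restr (~: I) x == c))
      \sum_(y : basis_full | (restr I y == b) && (restr (~: I) y == c)) A x y.

Definition dimI (I : {set 'I_n}) := #|basis_sub I|.

Definition reduced (psi : basis_full -> C) (I : {set 'I_n}) : 'M[C]_(dimI I) :=
  \matrix_(i, j) ptrace (pure_state psi) (enum_val i) (enum_val j).

(* s is the orthogonal projection (self-adjoint idempotent, acting on column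
   vectors) onto the image (column space) of the matrix M *)
Definition is_support_proj m (M s : 'M[C]_m) : Prop :=
  [/\ s *m s = s, map_mx Num.conj s ^T = s & (s^T == M^T)%MS].

Definition restricted_ops m (s : 'M[C]_m) : {vspace 'M[C]_m} :=
  limg (linfun (fun O : 'M[C]_m => s *m O *m s)).

(* dim Omega^k(rho): Omega^k is the product over |I| = k of the spaces
   { s_I O s_I }, so its dimension is the sum of their dimensions *)
Definition dim_Omega (s : forall I : {set 'I_n}, 'M[C]_(dimI I)) (k : nat) : nat :=
  \sum_(I : {set 'I_n} | #|I| == k) \dim (restricted_ops (s I)).

End Entanglement.

(* Main.v *)
Require Import Defs.
From HB Require Import structures.
From mathcomp Require Import all_boot all_order all_algebra.
From mathcomp Require Import zify.
Import Order.TTheory GRing.Theory Num.Theory.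
Local Open Scope ring_scope.

Lemma base_AB (F : fieldType) m (s : 'M[F]_m) : s *m s = s ->
  row_base s *m col_base s = 1%:M.
Proof.
move=> ss.
set A := row_base s; set B := col_base s.
have sBA : B *m A = s by exact: mulmx_base.
have h1 : B *m (A *m B) = B.
  apply: (row_free_inj (row_base_free s)).
  have -> : B *m (A *m B) *m A = (B *m A) *m (B *m A) by rewrite !mulmxA.
  by rewrite sBA ss.
have fB : row_free B^T.
  by rewrite /row_free mxrank_tr; have := col_base_full s; rewrite /row_full.
apply: trmx_inj; apply: (row_free_inj fB).
by rewrite /= trmx1 mul1mx -trmx_mul h1.
Qed.

Definition sw {F : fieldType} {m n p q} (A : 'M[F]_(m,n)) (B : 'M[F]_(p,q)) (O : 'M[F]_(n,p)) : 'M[F]_(m,q) :=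
  A *m O *m B.
Fact sw_linear (F : fieldType) m n p q (A : 'M[F]_(m,n)) (B : 'M[F]_(p,q)) : linear (sw A B).
Proof. by move=> a x y; rewrite /sw mulmxDr mulmxDl -scalemxAr -scalemxAl. Qed.
HB.instance Definition _ (F : fieldType) m n p q (A : 'M[F]_(m,n)) (B : 'M[F]_(p,q)) :=
  GRing.isLinear.Build F 'M[F]_(n,p) 'M[F]_(m,q) *:%R (sw A B) (@sw_linear F m n p q A B).
Lemma swE (F : fieldType) m n p q (A : 'M[F]_(m,n)) (B : 'M[F]_(p,q)) O :
  linfun (sw A B) O = A *m O *m B.
Proof. by rewrite lfunE. Qed.

Lemma dim_restr_gen (F : numClosedFieldType) m r (s : 'M[F]_m)
  (A : 'M[F]_(r, m)) (B : 'M[F]_(m, r)) : B *m A = s -> A *m B = 1%:M ->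
  \dim (restricted_ops s) = (r * r)%N.
Proof.
move=> sBA AB.
pose h := linfun (sw A B).
pose g := linfun (sw B A).
have -> : restricted_ops s = ((g \o h)%VF @: fullv)%VS.
  rewrite /restricted_ops; congr (_ @: _)%VS; apply/lfunP => O.
  rewrite comp_lfunE /g /h !swE.
  by rewrite -sBA !mulmxA.
rewrite limg_comp.
have -> : (h @: fullv = fullv)%VS.
  apply/eqP; rewrite eqEsubv subvf /=; apply/subvP => X _.
  have -> : X = h (g X) by rewrite /h /g !swE /= !mulmxA AB mul1mx -!mulmxA AB mulmx1.
  exact: memv_img (memvf _).
rewrite limg_dim_eq; first by rewrite dimvf; apply: dim_matrix.
apply/eqP; rewrite -subv0; apply/subvP => X; rewrite memv_cap memv_ker => /andP[_ /eqP].
rewrite /g swE /= => H; rewrite memv0; apply/eqP.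
have := congr1 (fun Y => A *m Y *m B) H.
rewrite /= mulmx0 mul0mx !mulmxA AB mul1mx -!mulmxA AB mulmx1; by [].
Qed.

Lemma dim_restr (F : numClosedFieldType) m (s : 'M[F]_m) : s *m s = s ->
  \dim (restricted_ops s) = (\rank s * \rank s)%N.
Proof.
move=> ss; apply: (@dim_restr_gen F m (\rank s) s (row_base s) (col_base s)); [exact: mulmx_base | exact: base_AB].
Qed.

Definition adjm {C : numClosedFieldType} {m n} (M : 'M[C]_(m, n)) : 'M[C]_(n, m) :=
  map_mx Num.conj M^T.

Lemma adjmM (C : numClosedFieldType) m n p (M : 'M[C]_(m, n)) (N : 'M[C]_(n, p)) :
  adjm (M *m N) = adjm N *m adjm M.
Proof. by rewrite /adjm trmx_mul map_mxM. Qed.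

Lemma rV_adj0 (C : numClosedFieldType) n (v : 'rV[C]_n) : v *m adjm v = 0 -> v = 0.
Proof.
move=> /matrixP /(_ 0 0); rewrite !mxE => H.
have H1 : \sum_(j < n) `|v 0 j| ^+ 2 = 0.
  by apply: (etrans _ H); apply: eq_bigr => j _; rewrite !mxE normCK.
apply/matrixP => i j; rewrite !mxE (ord1 i).
have /psumr_eq0P P := H1.
have := P (fun j _ => exprn_ge0 2 (normr_ge0 (v 0 j))) j isT.
by move/eqP; rewrite sqrf_eq0 normr_eq0 => /eqP.
Qed.

Lemma rank_adj (C : numClosedFieldType) m n (A : 'M[C]_(m, n)) :
  \rank (A *m adjm A) = \rank A.
Proof.
rewrite -[RHS](mxrank_mul_ker A (adjm A)).
suff -> : (A :&: kermx (adjm A))%MS = 0 by rewrite mxrank0 addn0.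
apply/eqP/rowV0P => v; rewrite sub_capmx => /andP[/submxP[w ->] /sub_kermxP H].
apply: rV_adj0.
by rewrite adjmM mulmxA H mul0mx.
Qed.


Definition Phi2 {C : numClosedFieldType} {n} {d : 'I_n -> nat} (psi : basis_full d -> C)
  (J K : {set 'I_n}) : 'M[C]_(dimI d J, dimI d K) :=
  \matrix_(i, k) \sum_(x : basis_full d | (restr J x == enum_val i) && (restr K x == enum_val k)) psi x.

Lemma Phi2_tr (C : numClosedFieldType) n (d : 'I_n -> nat) (psi : basis_full d -> C) J K :
  (Phi2 psi J K)^T = Phi2 psi K J.
Proof.
apply/matrixP => i k; rewrite !mxE; apply: eq_bigl => x; exact: andbC.
Qed.

Lemma reduced_Phi (C : numClosedFieldType) n (d : 'I_n -> nat) (psi : basis_full d -> C) J :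
  reduced psi J = Phi2 psi J (~: J) *m adjm (Phi2 psi J (~: J)).
Proof.
apply/matrixP => i j; rewrite !mxE /ptrace.
rewrite (reindex (@enum_val _ (pred_of_simpl (pred_of_argType (basis_sub d (~: J)))))) /=;
  last by apply: onW_bij; exact: enum_val_bij.
apply: eq_bigr => k _; rewrite !mxE rmorph_sum mulr_suml.
apply: eq_bigr => x _; rewrite mulr_sumr.
by apply: eq_bigr => y _.
Qed.

Theorem corollary1 (C : numClosedFieldType) (n : nat) (d : 'I_n -> nat)
    (psi : basis_full d -> C)
    (hunit : \sum_(x : basis_full d) `|psi x| ^+ 2 = 1)
    (s : forall I : {set 'I_n}, 'M[C]_(dimI d I))
    (hs : forall I : {set 'I_n}, is_support_proj (reduced psi I) (s I))
    (k : nat) (hk1 : (1 <= k)%N) (hk2 : (k <= n - 1)%N) :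
  dim_Omega s k = dim_Omega s (n - k).
Proof.
pose f I := \rank (Phi2 psi I (~: I)).
have Hs : forall I, \dim (restricted_ops (s I)) = (f I * f I)%N.
  move=> I; have [ss _ eqs] := hs I.
  rewrite dim_restr //.
  have -> : \rank (s I) = f I.
    by rewrite -mxrank_tr (eqmx_rank eqs) mxrank_tr reduced_Phi rank_adj.
  by [].
have Hc : forall I, f (~: I) = f I.
  by move=> I; rewrite /f setCK -Phi2_tr mxrank_tr.
rewrite /dim_Omega.
rewrite (eq_bigr (fun I => (f I * f I)%N)); last by move=> I _; exact: Hs.
rewrite [in RHS](eq_bigr (fun I => (f I * f I)%N)); last by move=> I _; exact: Hs.
rewrite [in RHS](reindex_inj (@setC_inj _)) /=.
apply: eq_big => [I|I _]; last by rewrite Hc.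
have := cardsC I; rewrite card_ord => HC.
have : (k <= n)%N by apply: (leq_trans hk2); exact: leq_subr.
move: HC; move: #|I| #|~: I| => a b HC Hk.
apply/eqP/eqP; lia.
Qed.
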